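(* Let $\varepsilon\in(0,1)$ and let $\mu=\mu(n)$ be sub-exponential in $n$ (i.e. $\mu=e^{o(n)}$). Let $P_0$ be a population of $\mu$ independent uniformly random points of $\{0,1\}^n$ and $Z_0:=\max\{0,\tau^{n-f_0}-g(P_0)\}$. Then for $n$ sufficiently large, \[E[Z_0]\ge\tfrac12\,\tau^{n-f_0}.\]
   Context: $f$ is OneMax, $f(x)=\sum_i x_i$. Potential: $\tau=\frac{4e}{\varepsilon}$, $\alpha=1-\frac1\tau\ln\big(1+\frac1\tau\big)$, $f_0=\lceil\alpha n\rceil$, $g(x)=\tau^{f(x)-f_0}$ if $f(x)\ge f_0$ and $g(x)=0$ otherwise; for a population (multiset) $P$, $g(P)=\sum_{x\in P}g(x)$. *)

(* Defs.v *)
From Stdlib Require Import Reals.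
From mathcomp Require Import all_boot.

Set Implicit Arguments.
Unset Strict Implicit.
Unset Printing Implicit Defensive.

Local Open Scope R_scope.

Definition tau (eps : R) : R := 4 * exp 1 / eps.

Definition alpha (eps : R) : R := 1 - / tau eps * ln (1 + / tau eps).

(* floor via Stdlib's [up] (x < up x <= x + 1), ceiling = - floor (- x) *)
Definition Rfloor (x : R) : Z := (up x - 1)%Z.
Definition Rceil (x : R) : Z := (- Rfloor (- x))%Z.

Definition f0 (eps : R) (n : nat) : nat := Z.to_nat (Rceil (alpha eps * INR n)).

Definition bits (n : nat) := {ffun 'I_n -> bool}.

Definition onemax (n : nat) (x : bits n) : nat := (\sum_(i < n) nat_of_bool (x i))%N.

Definition gval (eps : R) {n : nat} (x : bits n) : R :=
  if (f0 eps n <= onemax x)%N then tau eps ^ (onemax x - f0 eps n) else 0.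

(* populations of size mu: mu-tuples of bit strings (multisets with order) *)
Definition pop (n mu : nat) := {ffun 'I_mu -> bits n}.

Definition gpop (eps : R) (n mu : nat) (P : pop n mu) : R :=
  \big[Rplus/0]_(i < mu) gval eps (P i).

Definition Z0 (eps : R) (n mu : nat) (P : pop n mu) : R :=
  Rmax 0 (tau eps ^ (n - f0 eps n) - gpop eps P).

(* Expectation of Z_0 when P_0 consists of mu independent uniform points:
   uniform average over all mu-tuples of points of {0,1}^n. *)
Definition EZ0 (eps : R) (n mu : nat) : R :=
  (\big[Rplus/0]_(P : pop n mu) Z0 eps P) / INR #|{: pop n mu}|.

(* Main.v *)
Require Import Defs.
From HB Require Import structures.
From Stdlib Require Import Reals Lra.
From mathcomp Require Import all_boot zify.
Local Open Scope R_scope.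

Lemma RplusA' : associative Rplus. Proof. move=> x y z; ring. Qed.
Lemma RmultA' : associative Rmult. Proof. move=> x y z; ring. Qed.
HB.instance Definition _ := Monoid.isComLaw.Build R 0 Rplus RplusA' Rplus_comm Rplus_0_l.
HB.instance Definition _ := Monoid.isComLaw.Build R 1 Rmult RmultA' Rmult_comm Rmult_1_l.
Lemma Rm0l : left_zero 0 Rmult. Proof. move=> x; ring. Qed.
Lemma Rm0r : right_zero 0 Rmult. Proof. move=> x; ring. Qed.
HB.instance Definition _ := Monoid.isMulLaw.Build R 0 Rmult Rm0l Rm0r.
Lemma RDl : left_distributive Rmult Rplus. Proof. move=> x y z; ring. Qed.
Lemma RDr : right_distributive Rmult Rplus. Proof. move=> x y z; ring. Qed.
HB.instance Definition _ := Monoid.isAddLaw.Build R Rmult Rplus RDl RDr.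

Lemma sumR1 (A : finType) : \big[Rplus/0]_(x : A) 1 = INR #|A|.
Proof. rewrite big_const; elim: #|A| => [|k IH]; first by []. rewrite S_INR -IH /=; ring. Qed.

Lemma prod_const (A : finType) (c : R) : \big[Rmult/1]_(x : A) c = c ^ #|A|.
Proof. rewrite big_const; elim: #|A| => //= k ->; ring. Qed.

Lemma sum_le (I : Type) (r : seq I) (P : pred I) (F G : I -> R) :
  (forall i, P i -> F i <= G i) ->
  \big[Rplus/0]_(i <- r | P i) F i <= \big[Rplus/0]_(i <- r | P i) G i.
Proof. move=> H; elim/big_ind2: _ => //; [lra | move=> *; lra]. Qed.

Lemma sum_proj (I J : finType) (i : I) (h : J -> R) :
  \big[Rplus/0]_(P : {ffun I -> J}) h (P i) =
  (\big[Rplus/0]_(j : J) h j) * \big[Rmult/1]_(k | k != i) \big[Rplus/0]_(j : J) 1.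
Proof.
pose F k j := if k == i then h j else 1.
transitivity (\big[Rmult/1]_(k : I) \big[Rplus/0]_(j : J) F k j).
  rewrite bigA_distr_bigA; apply: eq_bigr => P _.
  rewrite (bigD1 i) //= big1 /F ?eqxx; first ring.
  by move=> k /negbTE ->.
rewrite (bigD1 i) //=; congr (_ * _).
  by apply: eq_bigr => j _; rewrite /F eqxx.
apply: eq_bigr => k /negbTE Hk; apply: eq_bigr => j _; by rewrite /F Hk.
Qed.

Lemma card_ffunR (I J : finType) :
  \big[Rplus/0]_(P : {ffun I -> J}) 1 = \big[Rmult/1]_(k : I) \big[Rplus/0]_(j : J) 1.
Proof. rewrite bigA_distr_bigA; apply: eq_bigr => P _; by rewrite big1. Qed.

Lemma pow_sum (t : R) (n : nat) (x : bits n) :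
  t ^ onemax x = \big[Rmult/1]_(i < n) t ^ (nat_of_bool (x i)).
Proof.
have Hm : {morph pow t : a b / addn a b >-> Rmult a b} by move=> a b; exact: pow_add.
rewrite /onemax. have H1 : pow t 0 = 1 by []. 
rewrite (big_morph (pow t) Hm H1).
by []. Qed.

Lemma sum_pow (t : R) (n : nat) :
  \big[Rplus/0]_(x : bits n) t ^ onemax x = (t + 1) ^ n.
Proof.
under eq_bigr do rewrite pow_sum.
rewrite -(bigA_distr_bigA (fun (i : 'I_n) (b : bool) => t ^ nat_of_bool b)).
under eq_bigr do rewrite big_bool /=.
by rewrite prod_const card_ord Rmult_1_r.
Qed.

Lemma sum_const (A : finType) (c : R) : \big[Rplus/0]_(x : A) c = INR #|A| * c.
Proof. rewrite big_const; elim: #|A| => [|k IH]; first by rewrite /=; ring. rewrite S_INR /= IH; ring. Qed.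

Lemma onemax_le n (x : bits n) : (onemax x <= n)%N.
Proof.
rewrite /onemax -[X in (_ <= X)%N]card_ord -sum1_card.
by apply: leq_sum => i _; exact: leq_b1.
Qed.

Lemma gval_le eps n (x : bits n) : 0 < tau eps ->
  gval eps x <= (tau eps ^ (n - f0 eps n) / tau eps ^ n) * tau eps ^ onemax x.
Proof.
move=> Ht; have Hn := onemax_le n x; have Hp := pow_lt _ n Ht.
rewrite /gval; case: ifP => H.
  have E : tau eps ^ (n - f0 eps n) * tau eps ^ onemax x = tau eps ^ (onemax x - f0 eps n) * tau eps ^ n.
    by rewrite -!pow_add; f_equal; lia.
  apply: Req_le; rewrite /Rdiv Rmult_assoc (Rmult_comm (/ _)) -Rmult_assoc E; field; lra.
apply: Rmult_le_pos; last by apply: pow_le; lra.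
apply: Rmult_le_pos; first by apply: pow_le; lra.
apply: Rlt_le; apply: Rinv_0_lt_compat; lra.
Qed.

Lemma card_bits n : INR #|{: bits n}| = 2 ^ n.
Proof.
rewrite -sumR1 card_ffunR.
under eq_bigr do rewrite big_bool.
by rewrite prod_const card_ord.
Qed.

Lemma EZ0_bound eps n mu : 0 < tau eps ->
  EZ0 eps n mu >= tau eps ^ (n - f0 eps n) *
      (1 - INR mu * ((tau eps + 1) / (2 * tau eps)) ^ n).
Proof.
move=> Ht.
set t := tau eps; have {}Ht : 0 < t by []. set T := t ^ (n - f0 eps n).
set M := INR #|{: pop n mu}|.
set Nb := INR #|{: bits n}|.
set G := \big[Rplus/0]_(x : bits n) gval eps x.
have HNb : Nb = 2 ^ n by rewrite /Nb card_bits.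
have HM : M = \big[Rmult/1]_(k : 'I_mu) Nb.
  by rewrite /M -sumR1 card_ffunR; under eq_bigr do rewrite sumR1.
have HMpos : 0 < M.
  rewrite HM; elim/big_ind: _ => //; first lra; first by move=> *; nra.
  by move=> _ _; rewrite HNb; apply: pow_lt; lra.
have Hproj : forall i : 'I_mu,
   (\big[Rplus/0]_(P : pop n mu) gval eps (P i)) * Nb = G * M.
  move=> i; rewrite (@sum_proj _ _ i (@gval eps n)) -/G sumR1 -/Nb HM [in RHS](bigD1 i) //=.
  ring.
have Hgp : (\big[Rplus/0]_(P : pop n mu) gpop eps P) * Nb = INR mu * (G * M).
  rewrite /gpop (exchange_big) big_distrl /=.
  under eq_bigr do rewrite Hproj.
  by rewrite sum_const card_ord.
have HG : G <= T / t ^ n * (t + 1) ^ n.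
  rewrite -sum_pow big_distrr; apply: sum_le => x _; exact: gval_le.
have HS : \big[Rplus/0]_(P : pop n mu) Defs.Z0 eps P + \big[Rplus/0]_(P : pop n mu) gpop eps P >= M * T.
  rewrite -big_split /= /M -sum_const; apply: Rle_ge; apply: sum_le => P _.
  rewrite /Defs.Z0; have := Rmax_r 0 (T - gpop eps P); rewrite -/t -/T. lra.
have Hc : ((t + 1) / (2 * t)) ^ n = (t + 1) ^ n / (2 ^ n * t ^ n).
  rewrite /Rdiv Rpow_mult_distr pow_inv Rpow_mult_distr; reflexivity.
have Htn := pow_lt _ n Ht.
have H2n : 0 < 2 ^ n by apply: pow_lt; lra.
rewrite /EZ0 -/M Hc.
have HT : 0 <= T by rewrite /T; apply: pow_le; lra.
set S := \big[Rplus/0]_(P : pop n mu) Defs.Z0 eps P.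
set Sg := \big[Rplus/0]_(P : pop n mu) gpop eps P.
rewrite -/Sg in HS Hgp; rewrite -/S in HS.
rewrite HNb in Hgp.
have HSg : Sg = INR mu * G * M / 2 ^ n.
  apply: (Rmult_eq_reg_r (2 ^ n)); last lra. rewrite Hgp; field; lra.
have Hmu0 : 0 <= INR mu := pos_INR mu.
have HG' : INR mu * G <= INR mu * (T / t ^ n * (t + 1) ^ n) by apply: Rmult_le_compat_l.
apply: Rle_ge.
apply: (Rmult_le_reg_r M); first lra.
rewrite /Rdiv (Rmult_assoc S) Rinv_l; last lra.
have E : T * (1 - INR mu * ((t + 1) ^ n * / (2 ^ n * t ^ n))) * M
  = M * T - (INR mu * (T / t ^ n * (t + 1) ^ n)) * M / 2 ^ n by field; lra.
rewrite E.
have : INR mu * G * M / 2 ^ n <= (INR mu * (T / t ^ n * (t + 1) ^ n)) * M / 2 ^ n.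
  apply: Rmult_le_compat_r; first by apply: Rlt_le; apply: Rinv_0_lt_compat.
  by apply: Rmult_le_compat_r; lra.
lra.
Qed.

Theorem lemma4 (eps : R) (mu : nat -> nat)
  (Heps : 0 < eps < 1)
  (Hmu : forall d : R, 0 < d ->
           exists N : nat, forall n : nat, (N <= n)%N -> INR (mu n) <= exp (d * INR n)) :
  exists N : nat, forall n : nat, (N <= n)%N ->
    EZ0 eps n (mu n) >= / 2 * tau eps ^ (n - f0 eps n).
Proof.
have He : 2 < exp 1 by have := exp_ineq1 1; lra.
have Hte : tau eps * eps = 4 * exp 1 by rewrite /tau; field; lra.
have Ht : 8 < tau eps by nra.
have Hd : 0 < ln (4 / 3) by rewrite -ln_1; apply: ln_increasing; lra.
have [N1 HN1] := Hmu _ Hd.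
exists (maxn N1 3) => n Hn.
have Hn1 : (N1 <= n)%N by apply: leq_trans Hn; apply: leq_maxl.
have Hn3 : (3 <= n)%N by apply: leq_trans Hn; apply: leq_maxr.
have Hmun : INR (mu n) <= (4 / 3) ^ n.
  rewrite -(exp_ln ((4/3) ^ n)); last by apply: pow_lt; lra.
  by rewrite ln_pow; [rewrite Rmult_comm; exact: HN1 | lra].
set t := tau eps in Ht Hte *.
set c := (t + 1) / (2 * t).
have Hc0 : 0 < c by rewrite /c; apply: Rdiv_lt_0_compat; lra.
have Hc1 : 4 / 3 * c <= 3 / 4.
  rewrite /c; apply: (Rmult_le_reg_r (2 * t)); first lra.
  have -> : 4 / 3 * ((t + 1) / (2 * t)) * (2 * t) = 4 / 3 * (t + 1) by field; lra.
  lra.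
have Hpow : INR (mu n) * c ^ n <= / 2.
  apply: Rle_trans (_ : (4 / 3) ^ n * c ^ n <= _).
    apply: Rmult_le_compat_r => //; apply: pow_le; lra.
  rewrite -Rpow_mult_distr.
  apply: Rle_trans (_ : (3 / 4) ^ n <= _).
    apply: pow_incr; lra.
  rewrite -(subnKC Hn3) pow_add.
  have : (3 / 4) ^ (n - 3) <= 1 ^ (n - 3) by apply: pow_incr; lra.
  rewrite pow1 /=; lra.
have := EZ0_bound eps n (mu n) (Rlt_trans 0 8 t ltac:(lra) Ht).
rewrite -/t -/c.
have HT : 0 <= t ^ (n - f0 eps n) by apply: pow_le; lra.
move=> H; apply: Rge_trans H _; apply: Rle_ge.
have -> : / 2 * t ^ (n - f0 eps n) = t ^ (n - f0 eps n) * (1 - / 2) by field.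
apply: Rmult_le_compat_l => //; lra.
Qed.
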